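(* Let $R$ be a commutative ring, $S$ a subring of $R$, $I$ an ideal of $S$, $n\ge1$, and $f\in R[x]$. The following are equivalent: (1) $f\in \mathrm{Int}_R(T_n(S),T_n(I))$; (2) for all $1\le i\le j\le n$, $\langle f,p_{ij}\rangle\in \mathrm{Int}(S^{\ast},I)$; (3) for every $0\le k\le n-1$ there exists $i\in\mathbb{N}$ with $\langle f,p_{i,\,i+k}\rangle\in\mathrm{Int}(S^{\ast},I)$.
   Context: $\mathbb{N}=\{1,2,3,\dots\}$. For a ring $A$, $T_n(A)$ denotes the ring of upper triangular $n\times n$ matrices with entries in $A$. For $g\in R[x]$ and a square matrix $C$ over $R$, $g(C)$ is the usual evaluation. $\mathrm{Int}_R(T_m(S),T_m(I))=\{g\in R[x]\mid \forall C\in T_m(S):\ g(C)\in T_m(I)\}$. Let $R[X]=R[\{x_{ab}\mid a,b\in\mathbb{N}\}]$ be the polynomial ring in independent commuting variables $x_{ab}$. Path polynomials: for $1\le i\le j$ and $k>0$, $p_{ij}^{(k)}=\sum_{i=i_1\le i_2\le\dots\le i_{k+1}=j} x_{i_1i_2}x_{i_2i_3}\cdots x_{i_ki_{k+1}}$; for $1\le i\le j$, $p_{ij}^{(0)}=\delta_{ij}$; for $i>j$, $p_{ij}^{(k)}=0$ for all $k$. Write $p_{ij}=(p_{ij}^{(k)})_{k\ge0}$. For $f=\sum_k f_kx^k\in R[x]$ set $\langle f,p_{ij}\rangle=\sum_{k\ge0} f_k\,p_{ij}^{(k)}\in R[X]$. $\mathrm{Int}(S^{\ast},I)$ denotes the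 set of polynomials in $R[X]$ that take values in $I$ whenever elements of $S$ are substituted (independently) for all the variables. *)

(* Defs.v *)
From HB Require Import structures.
From mathcomp Require Import all_boot all_order all_algebra.
Set Implicit Arguments. Unset Strict Implicit. Unset Printing Implicit Defensive.
Import Order.TTheory GRing.Theory Num.Theory.
Local Open Scope ring_scope.

Section Defs.
Variable R : comNzRingType.

Definition is_subring (S : {pred R}) : Prop :=
  [/\ 1 \in S, {in S &, forall a b, a - b \in S} & {in S &, forall a b, a * b \in S}].

Definition is_ideal_of (S I : {pred R}) : Prop :=
  [/\ {subset I <= S}, 0 \in I, {in I &, forall a b, a - b \in I}
    & {in S & I, forall s a, s * a \in I}].

Definition upper_tri_over (A : {pred R}) (m : nat) (C : 'M[R]_m) : Prop :=
  forall i j : 'I_m, ((j < i)%N -> C i j = 0) /\ C i j \in A.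

(* Int_R(T_m(S), T_m(I)), for m = n.+1 (so that 'M_m is a ring) *)
Definition IntR_T (S I : {pred R}) (n : nat) (g : {poly R}) : Prop :=
  forall C : 'M[R]_n.+1, upper_tri_over S C -> upper_tri_over I (horner_mx C g).

(* Value of the path polynomial p_ij^(k) at the assignment x_ab := x a b
   (indices are 1-based as in the paper; p^(k+1)_ij = sum_{i<=l<=j} x_il p^(k)_lj,
   p^(0)_ij = delta_ij, and everything vanishes for i > j). *)
Fixpoint path_ev (x : nat -> nat -> R) (i j k : nat) : R :=
  match k with
  | 0 => (i == j)%:R
  | k'.+1 => \sum_(i <= l < j.+1) x i l * path_ev x l j k'
  end.

Definition pair_ev (f : {poly R}) (x : nat -> nat -> R) (i j : nat) : R :=
  \sum_(k < size f) f`_k * path_ev x i j k.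

(* <f, p_ij> \in Int(S^*, I): all substitutions of elements of S for the
   variables x_ab give values in I *)
Definition in_Int_star (S I : {pred R}) (f : {poly R}) (i j : nat) : Prop :=
  forall x : nat -> nat -> R, (forall a b, x a b \in S) -> pair_ev f x i j \in I.

End Defs.

(* Main.v *)
Require Import Defs.
From HB Require Import structures.
From mathcomp Require Import all_boot all_order all_algebra.
Import Order.TTheory GRing.Theory Num.Theory.
Local Open Scope ring_scope.

Section Aux.
Variable R : comNzRingType.

Lemma pe_ext (x y : nat -> nat -> R) : (forall p q, x p q = y p q) ->
  forall k i j, path_ev x i j k = path_ev y i j k.
Proof.
move=> exy; elim=> [//|k IH] i j /=.
by apply: eq_bigr => l _; rewrite exy IH.
Qed.

Lemma pe_zero (x : nat -> nat -> R) i j k : (j < i)%N -> path_ev x i j k = 0.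
Proof.
case: k => [|k] /= h; first by rewrite gtn_eqF.
by rewrite big_geq.
Qed.

Lemma pe_shift (x : nat -> nat -> R) d k : forall i j,
  path_ev x (i + d) (j + d) k = path_ev (fun p q => x (p + d) (q + d)) i j k.
Proof.
elim: k => [|k IH] i j /=; first by rewrite eqn_add2r.
rewrite big_addn -addSn addnK; apply: eq_bigr => l _; by rewrite IH.
Qed.

Lemma mx_pe n (C : 'M[R]_n.+1) (x : nat -> nat -> R) :
  (forall p q : 'I_n.+1, (q < p)%N -> C p q = 0) ->
  (forall p q : 'I_n.+1, (p <= q)%N -> x p.+1 q.+1 = C p q) ->
  forall k (a b : 'I_n.+1), (C ^+ k) a b = path_ev x a.+1 b.+1 k.
Proof.
move=> Cup Cx; elim=> [|k IH] a b.
  by rewrite expr0 /= mxE eqSS.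
rewrite exprS mxE /=.
under eq_bigr => l _ do rewrite IH.
case: (leqP a b) => hab; last first.
  rewrite big_geq ?ltnS // big1 // => l _.
  case: (ltnP l a) => hl; first by rewrite Cup // mul0r.
  by rewrite pe_zero ?mulr0 // ltnS (leq_trans hab).
rewrite big_add1 /=.
rewrite (eq_bigr (fun l : 'I_n.+1 => (fun l : nat => C a (inord l) * path_ev x l.+1 b.+1 k) l)); last by move=> l _; rewrite inord_val.
rewrite -(big_mkord xpredT (fun l => C a (inord l) * path_ev x l.+1 b.+1 k)) /=.
have hb : (b < n.+1)%N := ltn_ord b.
have ha : (a <= n.+1)%N by rewrite ltnW // (leq_ltn_trans hab).
rewrite (@big_cat_nat _ _ _ a 0 n.+1) //.
rewrite (@big_cat_nat _ _ _ b.+1 a n.+1); last by []; last by rewrite ltnW.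
rewrite /= big_nat_cond big1 ?add0r; last first.
  move=> l /andP[/andP[_ hl] _]; rewrite Cup ?mul0r // inordK //.
  by rewrite (ltn_trans hl) ?ltn_ord.
rewrite [X in _ + X]big_nat_cond [X in _ + X]big1 ?addr0; last first.
  by move=> l /andP[/andP[hl _] _]; rewrite pe_zero ?mulr0.
apply: eq_big_nat => l /andP[h1 h2].
have hl : (l < n.+1)%N by apply: leq_trans h2 hb.
rewrite -[X in X * _ = _](Cx a (inord l)) ?inordK //.
Qed.

Lemma hmx_pe n (C : 'M[R]_n.+1) (x : nat -> nat -> R) (f : {poly R}) :
  (forall p q : 'I_n.+1, (q < p)%N -> C p q = 0) ->
  (forall p q : 'I_n.+1, (p <= q)%N -> x p.+1 q.+1 = C p q) ->
  forall a b : 'I_n.+1, horner_mx C f a b = pair_ev f x a.+1 b.+1.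
Proof.
move=> Cup Cx a b.
rewrite -{1}(coefK f) poly_def rmorph_sum summxE /pair_ev; apply: eq_bigr => k _.
rewrite -mul_polyC rmorphM /= horner_mx_C rmorphXn /= horner_mx_X -mulmxE mul_scalar_mx mxE (@mx_pe n C x Cup Cx).
by [].
Qed.

Lemma pair_shift (f : {poly R}) (x : nat -> nat -> R) d i j :
  pair_ev f x (i + d) (j + d) = pair_ev f (fun p q => x (p + d) (q + d)) i j.
Proof. by apply: eq_bigr => k _; rewrite pe_shift. Qed.

Lemma pair_zero (f : {poly R}) (x : nat -> nat -> R) i j :
  (j < i)%N -> pair_ev f x i j = 0.
Proof. by move=> h; apply: big1 => k _; rewrite pe_zero ?mulr0. Qed.

End Aux.


From mathcomp Require Import zify.

Theorem proposition2p10 (R : comNzRingType) (S I : {pred R})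
    (hS : is_subring S) (hI : is_ideal_of S I) (n : nat) (f : {poly R}) :
  let P1 := IntR_T S I n f in
  let P2 := forall i j : nat, (1 <= i)%N -> (i <= j)%N -> (j <= n.+1)%N -> in_Int_star S I f i j in
  let P3 := forall k : nat, (k <= n)%N -> exists2 i : nat, (1 <= i)%N & in_Int_star S I f i (i + k) in
  (P1 <-> P2) /\ (P2 <-> P3).
Proof.
move=> P1 P2 P3.
case: hS => S1 SB SM; case: hI => IS I0 IB IM.
have S0 : 0 \in S by rewrite -(subrr 1) SB.
split; split.
- move=> H1 i j hi hij hj x xS.
  pose C : 'M[R]_n.+1 := \matrix_(a, b) if (a <= b)%N then x a.+1 b.+1 else 0.
  have Cup : forall p q : 'I_n.+1, (q < p)%N -> C p q = 0.
    by move=> p q h; rewrite mxE leqNgt h.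
  have Cx : forall p q : 'I_n.+1, (p <= q)%N -> x p.+1 q.+1 = C p q.
    by move=> p q h; rewrite mxE h.
  have Ct : upper_tri_over S C.
    move=> p q; split; first exact: Cup.
    by rewrite mxE; case: ifP.
  have [_ ] := H1 C Ct (inord i.-1) (inord j.-1).
  rewrite (@hmx_pe _ _ _ _ f Cup Cx) !inordK; try lia.
  by rewrite !prednK //; lia.
- move=> H2 C Ct.
  pose x p q := C (inord p.-1) (inord q.-1).
  have Cup : forall p q : 'I_n.+1, (q < p)%N -> C p q = 0.
    by move=> p q h; case: (Ct p q) => ->.
  have Cx : forall p q : 'I_n.+1, (p <= q)%N -> x p.+1 q.+1 = C p q.
    by move=> p q _; rewrite /x /= !inord_val.
  move=> a b; rewrite (@hmx_pe _ _ _ _ f Cup Cx); split.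
    by move=> h; rewrite pair_zero.
  case: (ltnP b a) => h; first by rewrite pair_zero.
  have hb := ltn_ord b; apply: H2; try lia.
  by move=> p q; rewrite /x; case: (Ct (inord p.-1) (inord q.-1)).
- move=> H2 k hk; exists 1%N => //; apply: H2 => //; lia.
- move=> H3 i j hi hij hj x xS.
  have [i0 hi0 H] : exists2 i0 : nat, (1 <= i0)%N & in_Int_star S I f i0 (i0 + (j - i)) by apply: H3; lia.
  case: (leqP i0 i) => h.
    have -> : i = (i0 + (i - i0))%N by lia.
    have -> : j = ((i0 + (j - i)) + (i - i0))%N by lia.
    rewrite pair_shift; apply: H => p q; exact: xS.
  pose d := (i0 - i)%N.
  pose y p q := x (p - d)%N (q - d)%N.
  have -> : pair_ev f x i j = pair_ev f y (i + d) (j + d).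
    rewrite pair_shift; apply: eq_bigr => k _; congr (_ * _).
    by apply: pe_ext => p q; rewrite /y !addnK.
  have -> : (i + d = i0)%N by rewrite /d; lia.
  have -> : (j + d = i0 + (j - i))%N by rewrite /d; lia.
  by apply: H => p q; exact: xS.
Qed.
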